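(* Let $(\Sigma,\theta)$ be a Noetherian space. The map $S$ sending a topology $\tau$ on $\Sigma^*$ to the topology generated by the sets $\uparrow_{\le^*}(UV)$ for $U,V\in\tau$ and $\uparrow_{\le^*}W$ for $W\in\theta$ is a topology expander over $\Sigma^*$.
   Context: $\Sigma^*$: finite words; $UV$: concatenation; letters identified with one-letter words; $\le$ the specialisation preorder of $\theta$; $\le^*$ Higman's ordering ($u\le^*w$ iff a strictly increasing map $h$ of positions satisfies $u_i\le w_{h(i)}$); $\uparrow_{\le^*}$ upward closure. Noetherian: every subset compact. A refinement function over $X$ is a map $R$ from topologies on $X$ to topologies on $X$, monotone for inclusion and preserving Noetherianity. For a topology $\tau$ and $H\subseteq X$, $\tau|_H$ is the topology on $X$ generated by $\{U\cap H:U\in\tau\}$. A topology expander is a refinement function $R$ such that for every Noetherian $\tau$ with $\tau\subseteq R(\tau)$ and every $H$ closed in $\tau$, $R(\tau)|_H=R(\tau|_H)|_H$. *)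

(* Defs.v *)
From Stdlib Require Import List.
Import ListNotations.

Definition subset {X : Type} (A B : X -> Prop) : Prop := forall x, A x -> B x.

Definition fsubset {X : Type} (F G : (X -> Prop) -> Prop) : Prop :=
  forall U, F U -> G U.
Definition fequal {X : Type} (F G : (X -> Prop) -> Prop) : Prop :=
  forall U, F U <-> G U.

Definition is_topology {X : Type} (t : (X -> Prop) -> Prop) : Prop :=
  t (fun _ => True) /\
  (forall U V, t U -> t V -> t (fun x => U x /\ V x)) /\
  (forall F : (X -> Prop) -> Prop, fsubset F t ->
     t (fun x => exists U, F U /\ U x)).

Definition is_closed {X : Type} (t : (X -> Prop) -> Prop) (H : X -> Prop) : Prop :=
  t (fun x => ~ H x).

Definition compact {X : Type} (t : (X -> Prop) -> Prop) (A : X -> Prop) : Prop :=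
  forall F : (X -> Prop) -> Prop, fsubset F t ->
    subset A (fun x => exists U, F U /\ U x) ->
    exists l : list (X -> Prop),
      (forall U, In U l -> F U) /\ subset A (fun x => exists U, In U l /\ U x).

Definition noetherian {X : Type} (t : (X -> Prop) -> Prop) : Prop :=
  forall A : X -> Prop, compact t A.

Definition generated {X : Type} (G : (X -> Prop) -> Prop) : (X -> Prop) -> Prop :=
  fun U => forall t, is_topology t -> fsubset G t -> t U.

Definition restrict {X : Type} (t : (X -> Prop) -> Prop) (H : X -> Prop)
  : (X -> Prop) -> Prop :=
  generated (fun A => exists U, t U /\ A = (fun x => U x /\ H x)).

Definition refinement_function {X : Type}
  (R : ((X -> Prop) -> Prop) -> ((X -> Prop) -> Prop)) : Prop :=
  (forall t, is_topology t -> is_topology (R t)) /\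
  (forall t1 t2, is_topology t1 -> is_topology t2 -> fsubset t1 t2 ->
     fsubset (R t1) (R t2)) /\
  (forall t, is_topology t -> noetherian t -> noetherian (R t)).

Definition topology_expander {X : Type}
  (R : ((X -> Prop) -> Prop) -> ((X -> Prop) -> Prop)) : Prop :=
  refinement_function R /\
  (forall t, is_topology t -> noetherian t -> fsubset t (R t) ->
     forall H : X -> Prop, is_closed t H ->
       fequal (restrict (R t) H) (restrict (R (restrict t H)) H)).

Definition spec_le {S : Type} (theta : (S -> Prop) -> Prop) (x y : S) : Prop :=
  forall U, theta U -> U x -> U y.

Definition higman {S : Type} (le : S -> S -> Prop) (u w : list S) : Prop :=
  exists h : nat -> nat,
    (forall i j, i < j -> j < length u -> h i < h j) /\
    (forall i, i < length u ->
       exists a b, nth_error u i = Some a /\ nth_error w (h i) = Some b /\ le a b).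

Definition upclose {S : Type} (le : S -> S -> Prop) (A : list S -> Prop)
  : list S -> Prop :=
  fun w => exists u, A u /\ higman le u w.

Definition concat_set {S : Type} (U V : list S -> Prop) : list S -> Prop :=
  fun w => exists u v, U u /\ V v /\ w = u ++ v.

Definition letters {S : Type} (W : S -> Prop) : list S -> Prop :=
  fun w => exists a, W a /\ w = [a].

Definition S_map {S : Type} (theta : (S -> Prop) -> Prop)
  (tau : (list S -> Prop) -> Prop) : (list S -> Prop) -> Prop :=
  generated (fun A =>
    (exists U V, tau U /\ tau V /\
       A = upclose (spec_le theta) (concat_set U V)) \/
    (exists W, theta W /\ A = upclose (spec_le theta) (letters W))).

(* Main.v *)
Require Import Defs.
From Stdlib Require Import List Classical ClassicalEpsilon FunctionalExtensionality PropExtensionality Lia Arith.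
Import ListNotations.

Definition bunion {X : Type} (F : (X -> Prop) -> Prop) : X -> Prop :=
  fun x => exists U, F U /\ U x.
Definition lunion {X : Type} (l : list (X -> Prop)) : X -> Prop :=
  fun x => exists U, In U l /\ U x.
Definition inter {X : Type} (ls : list (X -> Prop)) : X -> Prop :=
  fun x => forall S, In S ls -> S x.

Lemma t_ext {X} (t : (X -> Prop) -> Prop) U V :
  t U -> (forall x, U x <-> V x) -> t V.
Proof.
  intros H E. replace V with U; auto.
  apply functional_extensionality; intro x; apply propositional_extensionality; auto.
Qed.

Lemma generated_top {X} (G : (X -> Prop) -> Prop) : is_topology (generated G).
Proof.
  repeat split.
  - intros t Ht _; apply (proj1 Ht).
  - intros U V HU HV t Ht HG. apply (proj1 (proj2 Ht)); [apply HU|apply HV]; auto.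
  - intros F HF t Ht HG. apply (proj2 (proj2 Ht)). intros U HU. apply (HF U HU); auto.
Qed.

Lemma generated_incl {X} (G : (X -> Prop) -> Prop) : fsubset G (generated G).
Proof. intros U HU t Ht HG; auto. Qed.

Lemma generated_min {X} (G t : (X -> Prop) -> Prop) :
  is_topology t -> fsubset G t -> fsubset (generated G) t.
Proof. intros Ht HG U HU; apply HU; auto. Qed.

Lemma gen_sub {X} (G1 G2 : (X -> Prop) -> Prop) :
  fsubset G1 (generated G2) -> fsubset (generated G1) (generated G2).
Proof. intros H. apply generated_min; auto using generated_top. Qed.

Lemma top_union2 {X} (t : (X -> Prop) -> Prop) U V :
  is_topology t -> t U -> t V -> t (fun x => U x \/ V x).
Proof.
  intros [_ [_ Hu]] HU HV.
  apply t_ext with (U := fun x => exists W, (W = U \/ W = V) /\ W x).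
  - apply Hu. intros W [->| ->]; auto.
  - intro x; split.
    + intros [W [[-> | ->] Hx]]; auto.
    + intros [Hx|Hx]; eauto.
Qed.

Lemma top_empty {X} (t : (X -> Prop) -> Prop) :
  is_topology t -> t (fun _ => False).
Proof.
  intros [_ [_ Hu]].
  apply t_ext with (U := fun x => exists W, (fun _ : X -> Prop => False) W /\ W x).
  - apply Hu. intros W [].
  - intro x; split; [intros [W [[] _]] | intros []].
Qed.

Lemma max_elem {I X : Type} (L : I -> Prop) (phi : I -> X -> Prop)
  (HL : forall c : nat -> I, (forall n, L (c n)) ->
        (forall n, subset (phi (c n)) (phi (c (S n)))) ->
        exists n, subset (phi (c (S n))) (phi (c n)))
  (Q : I -> Prop) (HQL : forall i, Q i -> L i) (i0 : I) (H0 : Q i0) :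
  exists m, Q m /\ forall i, Q i -> subset (phi m) (phi i) -> subset (phi i) (phi m).
Proof.
  apply NNPP; intro Hn.
  assert (step : forall m : {m | Q m}, {i : I | Q i /\ subset (phi (proj1_sig m)) (phi i)
                  /\ ~ subset (phi i) (phi (proj1_sig m))}).
  { intros [m Hm]. apply constructive_indefinite_description. simpl.
    apply NNPP; intro H1. apply Hn. exists m. split; auto. intros i Hi Hs.
    apply NNPP; intro H2. apply H1. exists i; auto. }
  pose (nxt := fun m : {m | Q m} => exist Q (proj1_sig (step m)) (proj1 (proj2_sig (step m)))).
  pose (c := fix c n := match n with 0 => exist Q i0 H0 | S n => nxt (c n) end).
  destruct (HL (fun n => proj1_sig (c n))) as [n Hn'].
  - intro n; apply HQL; exact (proj2_sig (c n)).
  - intro n. simpl. destruct (step (c n)) as [i [? [? ?]]]; simpl; auto.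
  - simpl in Hn'. destruct (step (c n)) as [i [? [? ?]]]; simpl in *. contradiction.
Qed.

Lemma chain_mono {X} (d : nat -> X -> Prop) :
  (forall n, subset (d n) (d (S n))) -> forall n m, n <= m -> subset (d n) (d m).
Proof.
  intros H n m Hnm. induction Hnm; intros x Hx; auto. apply H; auto.
Qed.

Lemma list_bound {X} (d : nat -> X -> Prop) (Hd : forall n, subset (d n) (d (S n)))
  (l : list (X -> Prop)) :
  (forall U, In U l -> exists n, subset U (d n)) ->
  exists N, forall U, In U l -> subset U (d N).
Proof.
  induction l as [|U l IH]; intros H.
  - exists 0; intros U [].
  - destruct (H U (or_introl eq_refl)) as [n Hn].
    destruct IH as [N HN]. { intros V HV; apply H; right; auto. }
    exists (max n N). intros V [<-|HV] x Hx.
    + apply (chain_mono d Hd n); [lia|auto].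
    + apply (chain_mono d Hd N); [lia|]. apply (HN V HV); auto.
Qed.

Lemma noeth_chain {X} (t : (X -> Prop) -> Prop) : noetherian t ->
  forall c : nat -> X -> Prop, (forall n, t (c n)) -> (forall n, subset (c n) (c (S n))) ->
  exists n, subset (c (S n)) (c n).
Proof.
  intros Hn c Hc Hs.
  destruct (Hn (bunion (fun U => exists n, U = c n)) (fun U => exists n, U = c n)) as [l [Hl1 Hl2]].
  - intros U [n ->]; auto.
  - intros x Hx; exact Hx.
  - destruct (list_bound c Hs l) as [N HN].
    { intros U HU. destruct (Hl1 U HU) as [n ->]. exists n; intros x Hx; auto. }
    exists N. intros x Hx.
    destruct (Hl2 x) as [U [HU Hx']]. { exists (c (S N)); eauto. }
    apply (HN U HU); auto.
Qed.
Lemma list_pairs {A B : Type} (R : A -> B -> Prop) (lu : list A) :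
  (forall U, In U lu -> exists V, R U V) ->
  exists lq : list (A * B), (forall p, In p lq -> R (fst p) (snd p)) /\
    forall U, In U lu -> exists p, In p lq /\ fst p = U.
Proof.
  induction lu as [|U lu IH]; intros H.
  - exists []. split; [intros p []|intros U []].
  - destruct (H U (or_introl eq_refl)) as [V HV].
    destruct IH as [lq [H1 H2]]. { intros W HW; apply H; right; auto. }
    exists ((U, V) :: lq). split.
    + intros p [<-|Hp]; auto.
    + intros W [<-|HW]. * exists (U, V); simpl; auto.
      * destruct (H2 W HW) as [p [? ?]]; exists p; simpl; auto.
Qed.

Lemma top_inter_list {X B} (t : (X -> Prop) -> Prop) (Ht : is_topology t) (f : B -> X -> Prop)
  (l : list B) : (forall p, In p l -> t (f p)) -> t (fun z => forall p, In p l -> f p z).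
Proof.
  induction l as [|p l IH]; intros H.
  - apply t_ext with (U := fun _ => True). apply (proj1 Ht).
    intro x; split; [intros _ p []|auto].
  - apply t_ext with (U := fun z => f p z /\ (forall q, In q l -> f q z)).
    + apply (proj1 (proj2 Ht)). apply H; left; auto. apply IH; intros q Hq; apply H; right; auto.
    + intro z; split.
      * intros [H1 H2] q [<-|Hq]; auto.
      * intros H1; split; [apply H1; left; auto| intros q Hq; apply H1; right; auto].
Qed.

Lemma rect_finite {X} (t : (X -> Prop) -> Prop) (Ht : is_topology t) (Hn : noetherian t)
  (P : (X -> Prop) -> (X -> Prop) -> Prop) (HP : forall U V, P U V -> t U /\ t V) :
  exists l : list ((X -> Prop) * (X -> Prop)),
    (forall p, In p l -> P (fst p) (snd p)) /\
    forall x y, (exists U V, P U V /\ U x /\ V y) -> exists p, In p l /\ fst p x /\ snd p y.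
Proof.
  pose (Psi := fun G : X -> Prop => exists l : list ((X -> Prop) * (X -> Prop)),
    (forall p, In p l -> P (fst p) (snd p)) /\
    forall x y, ~ G y -> (exists U V, P U V /\ U x /\ V y) -> exists p, In p l /\ fst p x /\ snd p y).
  assert (HPsi : Psi (fun _ => False)).
  2:{ destruct HPsi as [l [H1 H2]]. exists l; split; auto. }
  apply NNPP; intro Hno.
  destruct (max_elem t (fun G => G) (noeth_chain t Hn) (fun G => t G /\ ~ Psi G)
              (fun G H => proj1 H) (fun _ => False) (conj (top_empty t Ht) Hno))
    as [Gs [[HGs HnPsi] Hmax]].
  apply HnPsi.
  destruct (classic (exists y, ~ Gs y /\ exists U V, P U V /\ V y)) as [[y0 [Hy0 HE0]]|HnE].
  2:{ exists []. split; [intros p []|]. intros x y Hy [U [V [HUV [Hx HV]]]].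
      exfalso; apply HnE; exists y; split; auto. exists U, V; auto. }
  pose (Dy := fun y => bunion (fun U => exists V, P U V /\ V y)).
  assert (tDy : forall y, t (Dy y)).
  { intro y. apply (proj2 (proj2 Ht)). intros U [V [HUV _]]. apply (HP U V HUV). }
  destruct (max_elem t (fun G => G) (noeth_chain t Hn)
     (fun D => t D /\ exists y, ~ Gs y /\ (exists U V, P U V /\ V y) /\ D = Dy y)
     (fun G H => proj1 H) (Dy y0) (conj (tDy y0) (ex_intro _ y0 (conj Hy0 (conj HE0 eq_refl)))))
     as [Ds [[_ [ys [Hys [HEs ->]]]] HDmax]].
  destruct (Hn (Dy ys) (fun U => exists V, P U V /\ V ys)) as [lu [Hlu1 Hlu2]].
  { intros U [V [HUV _]]. apply (HP U V HUV). }
  { intros x Hx; exact Hx. }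
  destruct (list_pairs (fun U V => P U V /\ V ys) lu Hlu1) as [lq [Hq1 Hq2]].
  pose (W := fun z => forall p, In p lq -> snd p z).
  assert (tW : t W).
  { apply top_inter_list; auto. intros p Hp. apply (HP _ _ (proj1 (Hq1 p Hp))). }
  assert (HWys : W ys). { intros p Hp; apply (Hq1 p Hp). }
  assert (HPsi' : Psi (fun z => Gs z \/ W z)).
  { apply NNPP; intro HnP.
    assert (Hsub := Hmax (fun z => Gs z \/ W z) (conj (top_union2 t _ _ Ht HGs tW) HnP)
                     (fun z Hz => or_introl Hz)).
    apply Hys. exact (Hsub ys (or_intror HWys)). }
  destruct HPsi' as [l' [Hl'1 Hl'2]].
  exists (l' ++ lq). split.
  - intros p Hp. apply in_app_or in Hp as [Hp|Hp]; auto. apply (Hq1 p Hp).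
  - intros x y Hy HUV.
    destruct (classic (W y)) as [HWy|HWy].
    2:{ destruct (Hl'2 x y) as [p [Hp Hp']]; auto. { intros [?|?]; auto. }
        exists p; split; auto. apply in_or_app; auto. }
    assert (Hsub : subset (Dy ys) (Dy y)).
    { intros x' Hx0. destruct (Hlu2 x' Hx0) as [U' [HU' Hx']].
      destruct (Hq2 U' HU') as [p [Hp <-]].
      exists (fst p). split; auto. exists (snd p); split; [apply (Hq1 p Hp)|apply HWy; auto]. }
    assert (Hsub2 := HDmax (Dy y)).
    destruct HUV as [U [V [HUV [Hx HVy]]]].
    assert (HxD : Dy ys x).
    { apply Hsub2; auto.
      - split; auto. exists y; split; auto. split; auto. exists U, V; auto.
      - exists U; split; auto. exists V; auto. }
    destruct (Hlu2 x HxD) as [U' [HU' Hx']].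
    destruct (Hq2 U' HU') as [p [Hp <-]].
    exists p. split; [apply in_or_app; auto|split; auto].
Qed.
Section Alex.
Context {X : Type} (G : (X -> Prop) -> Prop).
Hypothesis HG : forall F, fsubset F G ->
  exists l, (forall U, In U l -> F U) /\ subset (bunion F) (lunion l).

Definition covered (Ls : list (list (X -> Prop))) (l : list (X -> Prop)) (x : X) :=
  (exists ls, In ls Ls /\ inter ls x) \/ (exists S, In S l /\ S x).

Lemma covered_app_l Ls1 Ls2 l1 l2 x : covered Ls1 l1 x -> covered (Ls1 ++ Ls2) (l1 ++ l2) x.
Proof.
  intros [[ls [H1 H2]]|[S [H1 H2]]]; [left|right]; eexists; split; eauto; apply in_or_app; auto.
Qed.
Lemma covered_app_r Ls1 Ls2 l1 l2 x : covered Ls2 l2 x -> covered (Ls1 ++ Ls2) (l1 ++ l2) x.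
Proof.
  intros [[ls [H1 H2]]|[S [H1 H2]]]; [left|right]; eexists; split; eauto; apply in_or_app; auto.
Qed.

Lemma filter_fam (Fs : (X -> Prop) -> Prop) (S : X -> Prop) (l : list (X -> Prop)) :
  (forall T, In T l -> Fs T \/ T = S) ->
  exists l', (forall T, In T l' -> Fs T) /\
    forall y T, In T l -> T y -> S y \/ exists T', In T' l' /\ T' y.
Proof.
  induction l as [|T l IH]; intros H.
  - exists []; split; [intros T []|intros y T []].
  - destruct IH as [l' [H1 H2]]. { intros T' HT'; apply H; right; auto. }
    destruct (H T (or_introl eq_refl)) as [HT| ->].
    + exists (T :: l'). split. { intros T' [<-|HT']; auto. }
      intros y T' [<-|HT'] Hy. { right; exists T; simpl; auto. }
      destruct (H2 y T' HT' Hy) as [?|[T'' [? ?]]]; auto. right; exists T''; simpl; auto.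
    + exists l'. split; auto. intros y T' [<-|HT'] Hy; auto.
      apply (H2 y T' HT' Hy).
Qed.

Lemma alex_core (A : X -> Prop) (Lf : list (X -> Prop) -> Prop)
  (HLf : forall ls, Lf ls -> forall S, In S ls -> G S)
  (Hcov : forall x, A x -> exists ls, Lf ls /\ inter ls x) :
  exists Ls, (forall ls, In ls Ls -> Lf ls) /\ forall x, A x -> exists ls, In ls Ls /\ inter ls x.
Proof.
  apply NNPP; intro Hno.
  pose (bad := fun F : (X -> Prop) -> Prop => fsubset F G /\
     ~ exists Ls l, (forall ls, In ls Ls -> Lf ls) /\ (forall S, In S l -> F S) /\
         forall x, A x -> covered Ls l x).
  assert (HL : forall c : nat -> ((X -> Prop) -> Prop), (forall n, fsubset (c n) G) ->
        (forall n, subset (bunion (c n)) (bunion (c (S n)))) ->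
        exists n, subset (bunion (c (S n))) (bunion (c n))).
  { intros c Hc Hs.
    destruct (HG (fun S => exists n, c n S)) as [l [Hl1 Hl2]].
    { intros S [n Hn]. apply (Hc n); auto. }
    destruct (list_bound (fun n => bunion (c n)) Hs l) as [N HN].
    { intros U HU. destruct (Hl1 U HU) as [n Hn]. exists n. intros x Hx; exists U; auto. }
    exists N. intros x [U [HU Hx]].
    destruct (Hl2 x) as [U' [HU' Hx']]. { exists U; split; eauto. }
    apply (HN U' HU'); auto. }
  destruct (max_elem (fun F => fsubset F G) bunion HL bad (fun F H => proj1 H) (fun _ => False))
    as [Fs [[HFsG HFsbad] Hmax]].
  { split. { intros U []. }
    intros [Ls [l [H1 [H2 H3]]]]. apply Hno. exists Ls; split; auto.
    intros x Hx. destruct (H3 x Hx) as [?|[S [HS _]]]; auto. destruct (H2 S HS). }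
  assert (Hclaim : forall x, A x -> bunion Fs x).
  { intros x Hx. apply NNPP; intro Hnx.
    destruct (Hcov x Hx) as [ls [Hls Hxls]].
    assert (PS : forall S, In S ls -> exists Ls l, (forall ls, In ls Ls -> Lf ls) /\
                 (forall T, In T l -> Fs T) /\ forall y, A y -> S y \/ covered Ls l y).
    { intros S HS.
      pose (FS := fun T => Fs T \/ T = S).
      assert (HnbadS : ~ bad FS).
      { intros Hb. apply Hnx. apply (Hmax FS Hb).
        - intros y [U [HU Hy]]. exists U; split; auto. left; auto.
        - exists S. split; [right; auto|apply Hxls; auto]. }
      assert (HFSG : fsubset FS G).
      { intros T [HT| ->]; auto. apply (HLf ls Hls S HS). }
      apply NNPP; intro HnPS. apply HnbadS. split; auto.
      intros [Ls [l [H1 [H2 H3]]]].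
      destruct (filter_fam Fs S l H2) as [l' [Hl'1 Hl'2]].
      apply HnPS. exists Ls, l'. split; auto. split; auto.
      intros y Hy. destruct (H3 y Hy) as [Hc|[T [HT HTy]]].
      - right; left; auto.
      - destruct (Hl'2 y T HT HTy) as [?|[T' [? ?]]]; auto. right; right; exists T'; auto. }
    assert (Hcomb : forall ls', (forall S, In S ls' -> In S ls) ->
      exists Ls l, (forall ls, In ls Ls -> Lf ls) /\
                 (forall T, In T l -> Fs T) /\ forall y, A y -> inter ls' y \/ covered Ls l y).
    { induction ls' as [|S ls' IH]; intros Hsub.
      - exists [], []. split; [intros ? []|split; [intros ? []|]].
        intros y _; left; intros S [].
      - destruct (PS S (Hsub S (or_introl eq_refl))) as [Ls1 [l1 [A1 [B1 C1]]]].
        destruct IH as [Ls2 [l2 [A2 [B2 C2]]]]. { intros T HT; apply Hsub; right; auto. }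
        exists (Ls1 ++ Ls2), (l1 ++ l2). split; [|split].
        + intros ls0 H0. apply in_app_or in H0 as [?|?]; auto.
        + intros T H0. apply in_app_or in H0 as [?|?]; auto.
        + intros y Hy. destruct (C1 y Hy) as [HSy|Hc1]; [|right; apply covered_app_l; auto].
          destruct (C2 y Hy) as [Hi|Hc2]; [|right; apply covered_app_r; auto].
          left. intros T [<-|HT]; auto. apply Hi; auto. }
    destruct (Hcomb ls (fun S H => H)) as [Ls [l [A1 [B1 C1]]]].
    apply HFsbad. exists (ls :: Ls), l. split; [|split; auto].
    - intros ls0 [<-|H0]; auto.
    - intros y Hy. destruct (C1 y Hy) as [Hi|[[ls0 [H0 H0']]|Hc]].
      + left; exists ls; simpl; auto.
      + left; exists ls0; simpl; auto.
      + right; auto. }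
  destruct (HG Fs HFsG) as [l [Hl1 Hl2]].
  apply HFsbad. exists [], l. split; [intros ? []|split; auto].
  intros x Hx. right. apply Hl2, Hclaim; auto.
Qed.

Lemma basic_nbhd : forall O, generated G O -> forall x, O x ->
  exists ls, (forall S, In S ls -> G S) /\ inter ls x /\ subset (inter ls) O.
Proof.
  intros O HO.
  refine (generated_min G (fun O => forall x, O x -> exists ls, (forall S, In S ls -> G S) /\ inter ls x /\ subset (inter ls) O) _ _ O HO).
  - repeat split.
    + intros x _. exists []. split; [intros ? []|split; [intros ? []|intros y _; auto]].
    + intros U V HU HV x [Hx1 Hx2].
      destruct (HU x Hx1) as [l1 [A1 [B1 C1]]]. destruct (HV x Hx2) as [l2 [A2 [B2 C2]]].
      exists (l1 ++ l2). split; [|split].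
      * intros S HS; apply in_app_or in HS as [?|?]; auto.
      * intros S HS; apply in_app_or in HS as [?|?]; [apply B1|apply B2]; auto.
      * intros y Hy. split; [apply C1|apply C2]; intros S HS; apply Hy; apply in_or_app; auto.
    + intros F HF x [U [HU Hx]].
      destruct (HF U HU x Hx) as [l1 [A1 [B1 C1]]].
      exists l1. split; auto. split; auto. intros y Hy. exists U; split; auto.
  - intros S HS x Hx. exists [S]. split; [intros T [<-|[]]; auto|split].
    + intros T [<-|[]]; auto.
    + intros y Hy. apply Hy; left; auto.
Qed.

Lemma list_lift (F : (X -> Prop) -> Prop) (Ls : list (list (X -> Prop))) :
  (forall ls, In ls Ls -> exists O, F O /\ subset (inter ls) O) ->
  exists lo, (forall O, In O lo -> F O) /\
    forall x ls, In ls Ls -> inter ls x -> exists O, In O lo /\ O x.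
Proof.
  induction Ls as [|ls Ls IH]; intros H.
  - exists []; split; [intros ? []|intros x ls []].
  - destruct (H ls (or_introl eq_refl)) as [O [HO HOs]].
    destruct IH as [lo [H1 H2]]. { intros ls' H'; apply H; right; auto. }
    exists (O :: lo). split. { intros O' [<-|?]; auto. }
    intros x ls' [<-|Hls'] Hx.
    + exists O; simpl; auto.
    + destruct (H2 x ls' Hls' Hx) as [O' [? ?]]; exists O'; simpl; auto.
Qed.

Lemma alexander : noetherian (generated G).
Proof.
  intros A F HF HA.
  pose (Lf := fun ls => (forall S, In S ls -> G S) /\ exists O, F O /\ subset (inter ls) O).
  destruct (alex_core A Lf) as [Ls [H1 H2]].
  - intros ls [H _]; auto.
  - intros x Hx. destruct (HA x Hx) as [O [HO Hox]].
    destruct (basic_nbhd O (HF O HO) x Hox) as [ls [A1 [B1 C1]]].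
    exists ls. split; auto. split; auto. exists O; auto.
  - destruct (list_lift F Ls) as [lo [L1 L2]].
    { intros ls Hls. apply (H1 ls Hls). }
    exists lo. split; auto.
    intros x Hx. destruct (H2 x Hx) as [ls [Hls Hx']]. apply (L2 x ls); auto.
Qed.
End Alex.
Lemma higman_trans {A} (le : A -> A -> Prop) (Htr : forall a b c, le a b -> le b c -> le a c)
  u v w : higman le u v -> higman le v w -> higman le u w.
Proof.
  intros [h1 [M1 E1]] [h2 [M2 E2]]. exists (fun i => h2 (h1 i)). split.
  - intros i j Hij Hj. apply M2. apply M1; auto.
    destruct (E1 j Hj) as [a [b [_ [Hb _]]]]. apply nth_error_Some. rewrite Hb; discriminate.
  - intros i Hi. destruct (E1 i Hi) as [a [b [Ha [Hb Hab]]]].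
    assert (Hl : h1 i < length v) by (apply nth_error_Some; rewrite Hb; discriminate).
    destruct (E2 (h1 i) Hl) as [b' [c [Hb' [Hc Hbc]]]].
    rewrite Hb in Hb'; inversion Hb'; subst. exists a, c; eauto.
Qed.

Lemma higman_app_l {A} (le : A -> A -> Prop) (Hr : forall a, le a a) u v : higman le u (u ++ v).
Proof.
  exists (fun i => i). split; auto.
  intros i Hi. destruct (nth_error u i) as [a|] eqn:E.
  - exists a, a. split; auto. split; auto. rewrite nth_error_app1; auto.
  - apply nth_error_Some in E as []; auto.
Qed.

Lemma higman_app_r {A} (le : A -> A -> Prop) (Hr : forall a, le a a) u v : higman le v (u ++ v).
Proof.
  exists (fun i => length u + i). split; [intros; lia|].
  intros i Hi. destruct (nth_error v i) as [a|] eqn:E.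
  - exists a, a. split; auto. split; auto. rewrite nth_error_app2 by lia.
    replace (length u + i - length u) with i by lia. auto.
  - apply nth_error_Some in E as []; auto.
Qed.

Section Main.
Context {Sigma : Type} (theta : (Sigma -> Prop) -> Prop).
Let le := spec_le theta.
Lemma le_refl : forall a, le a a. Proof. unfold le, spec_le. intros a U _ H; auto. Qed.
Lemma le_trans : forall a b c, le a b -> le b c -> le a c.
Proof. unfold le, spec_le. intros a b c H1 H2 U HU Ha. apply (H2 U HU), (H1 U HU), Ha. Qed.

Definition Gen (t : (list Sigma -> Prop) -> Prop) : (list Sigma -> Prop) -> Prop :=
  fun A =>
    (exists U V, t U /\ t V /\ A = upclose (spec_le theta) (concat_set U V)) \/
    (exists W, theta W /\ A = upclose (spec_le theta) (letters W)).

Lemma S_up t O : S_map theta t O ->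
  forall x y, O x -> higman le x y -> O y.
Proof.
  intros HO.
  refine (generated_min _ (fun O => forall x y, O x -> higman le x y -> O y) _ _ O HO).
  - split; [|split].
    + intros x y _ _; exact I.
    + intros U V HU HV x y [H1 H2] Hxy; split; eauto.
    + intros F HF x y [U [HU Hx]] Hxy. exists U; split; auto. apply (HF U HU x y Hx Hxy).
  - intros A [[U [V [_ [_ ->]]]]|[W [_ ->]]] x y [w [Hw Hwx]] Hxy; exists w; split; auto;
      eapply higman_trans; eauto; exact le_trans.
Qed.

Definition agree {X} (H U V : X -> Prop) := forall x, H x -> (U x <-> V x).

Lemma agree_top {X} (T : (X -> Prop) -> Prop) (H : X -> Prop) : is_topology T ->
  is_topology (fun U' => exists U, T U /\ agree H U' U).
Proof.
  intros HT. split; [|split].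
  - exists (fun _ => True). split; [apply (proj1 HT)|intros x _; tauto].
  - intros U' V' [U [HU AU]] [V [HV AV]]. exists (fun x => U x /\ V x).
    split; [apply (proj1 (proj2 HT)); auto|].
    intros x Hx. rewrite (AU x Hx), (AV x Hx). tauto.
  - intros F HF. exists (bunion (fun U => T U /\ exists U', F U' /\ agree H U' U)).
    split.
    + apply (proj2 (proj2 HT)). intros U [? _]; auto.
    + intros x Hx. split.
      * intros [U' [HU' Hx']]. destruct (HF U' HU') as [U [HU AU]].
        exists U. split; [split; eauto|apply AU; auto].
      * intros [U [[_ [U' [HU' AU]]] HxU]]. exists U'; split; auto. apply AU; auto.
Qed.

Lemma restrict_agree {X} (T : (X -> Prop) -> Prop) (H : X -> Prop) (HT : is_topology T) U' :
  restrict T H U' -> exists U, T U /\ agree H U' U.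
Proof.
  intros HU'.
  refine (generated_min _ _ (agree_top T H HT) _ U' HU').
  intros A [U [HU ->]]. exists U. split; auto. intros x Hx; tauto.
Qed.

Lemma restrict_gen {X} (T : (X -> Prop) -> Prop) (H U : X -> Prop) :
  T U -> restrict T H (fun x => U x /\ H x).
Proof. intros HU. apply generated_incl. exists U; auto. Qed.

Lemma agree_up (H : list Sigma -> Prop)
  (Hd : forall x y, H y -> higman le x y -> H x) U U' V V' :
  agree H U U' -> agree H V V' ->
  agree H (upclose le (concat_set U V)) (upclose le (concat_set U' V')).
Proof.
  assert (Hg : forall U U' V V', agree H U U' -> agree H V V' -> forall x, H x ->
    upclose le (concat_set U V) x -> upclose le (concat_set U' V') x).
  { intros U1 U1' V1 V1' AU AV x Hx [w [[u [v [Hu [Hv ->]]]] Hw]].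
    assert (Huv : H (u ++ v)) by eauto.
    exists (u ++ v). split; auto. exists u, v. split; [|split; auto].
    - apply AU; auto. apply Hd with (u ++ v); auto. apply higman_app_l, le_refl.
    - apply AV; auto. apply Hd with (u ++ v); auto. apply higman_app_r, le_refl. }
  intros AU AV x Hx. split; apply Hg; auto; intros y Hy; symmetry; auto.
Qed.

Lemma Gen_finite t : is_topology t -> noetherian t -> noetherian theta ->
  forall F, fsubset F (Gen t) ->
  exists l, (forall U, In U l -> F U) /\ subset (bunion F) (lunion l).
Proof.
  intros Ht Hn Hth F HF.
  destruct (rect_finite t Ht Hn (fun U V => t U /\ t V /\ F (upclose le (concat_set U V))))
    as [lp [Hp1 Hp2]].
  { intros U V [? [? _]]; auto. }
  destruct (Hth (bunion (fun W => theta W /\ F (upclose le (letters W))))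
                (fun W => theta W /\ F (upclose le (letters W)))) as [lw [Hw1 Hw2]].
  { intros W [? _]; auto. }
  { intros x Hx; exact Hx. }
  exists (map (fun p => upclose le (concat_set (fst p) (snd p))) lp ++
          map (fun W => upclose le (letters W)) lw).
  split.
  - intros A HA. apply in_app_or in HA as [HA|HA]; apply in_map_iff in HA as [p [<- Hp]].
    + apply (Hp1 p Hp).
    + apply (Hw1 p Hp).
  - intros x [A [HA Hx]]. destruct (HF A HA) as [[U [V [HU [HV ->]]]]|[W [HW ->]]].
    + destruct Hx as [w [[u [v [Hu [Hv ->]]]] Hw]].
      destruct (Hp2 u v) as [p [Hp [Hpu Hpv]]]. { exists U, V; auto. }
      exists (upclose le (concat_set (fst p) (snd p))). split.
      * apply in_or_app; left. apply in_map_iff. exists p; auto.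
      * exists (u ++ v). split; auto. exists u, v; auto.
    + destruct Hx as [w [[a [Ha ->]] Hw]].
      destruct (Hw2 a) as [W' [HW' Ha']]. { exists W; auto. }
      exists (upclose le (letters W')). split.
      * apply in_or_app; right. apply in_map_iff. exists W'; auto.
      * exists [a]. split; auto. exists a; auto.
Qed.
End Main.

Theorem mainTheorem12 (Sigma : Type) (theta : (Sigma -> Prop) -> Prop)
  (Htop : is_topology theta) (Hnoeth : noetherian theta) :
  topology_expander (S_map theta).
Proof.
  split; [split; [|split]|].
  - intros t _. apply generated_top.
  - intros t1 t2 _ _ H12. apply gen_sub. intros A HA. apply generated_incl.
    destruct HA as [[U [V [HU [HV ->]]]]|HA]; [left; exists U, V; auto|right; auto].
  - intros t Ht Hn. apply alexander. apply (Gen_finite theta t Ht Hn Hnoeth).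
  - intros t Ht Hn Hsub H HH U0.
    pose (t' := restrict t H).
    assert (Ht' : is_topology t') by apply generated_top.
    assert (Hd : forall x y, H y -> higman (spec_le theta) x y -> H x).
    { intros x y Hy Hxy. apply NNPP; intro Hx.
      apply (S_up theta t _ (Hsub _ HH) x y Hx Hxy Hy). }
    assert (D1 : forall O, S_map theta t O -> exists O', S_map theta t' O' /\ agree H O O').
    { intros O HO.
      refine (generated_min _ _ (agree_top _ H (generated_top _)) _ O HO).
      intros A [[U [V [HU [HV ->]]]]|[W [HW ->]]].
      - exists (upclose (spec_le theta) (concat_set (fun x => U x /\ H x) (fun x => V x /\ H x))).
        split.
        + apply generated_incl. left. exists (fun x => U x /\ H x), (fun x => V x /\ H x).
          split; [apply restrict_gen; auto|split; [apply restrict_gen; auto|auto]].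
        + apply agree_up; auto; intros x Hx; tauto.
      - exists (upclose (spec_le theta) (letters W)). split.
        + apply generated_incl. right. exists W; auto.
        + intros x _; tauto. }
    assert (D2 : forall O', S_map theta t' O' -> exists O, S_map theta t O /\ agree H O' O).
    { intros O HO.
      refine (generated_min _ _ (agree_top _ H (generated_top _)) _ O HO).
      intros A [[U' [V' [HU [HV ->]]]]|[W [HW ->]]].
      - destruct (restrict_agree t H Ht U' HU) as [U [HU1 AU]].
        destruct (restrict_agree t H Ht V' HV) as [V [HV1 AV]].
        exists (upclose (spec_le theta) (concat_set U V)). split.
        + apply generated_incl. left. exists U, V; auto.
        + apply agree_up; auto.
      - exists (upclose (spec_le theta) (letters W)). split.
        + apply generated_incl. right. exists W; auto.
        + intros x _; tauto. }
    split.
    + apply gen_sub. intros A [O [HO ->]].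
      destruct (D1 O HO) as [O' [HO' AO]].
      apply t_ext with (U := fun x => O' x /\ H x).
      * apply generated_incl. exists O'; auto.
      * intros x; split; intros [H1 H2]; split; auto; apply (AO x H2); auto.
    + apply gen_sub. intros A [O [HO ->]].
      destruct (D2 O HO) as [O' [HO' AO]].
      apply t_ext with (U := fun x => O' x /\ H x).
      * apply generated_incl. exists O'; auto.
      * intros x; split; intros [H1 H2]; split; auto; apply (AO x H2); auto.
Qed.
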